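(* Let $L/K$ be a finite totally ramified separable extension of degree $n>1$ with $\nu=v_p(n)$, let $\pi_K,\pi_L$ be uniformizers of $K,L$, and let $\hat{\mathcal{F}}(X)=\sum_{h\ge0}a_hX^{h+n}$ (with $a_h\in R$) be the unique series with $\hat{\mathcal{F}}(\pi_L)=\pi_K$. Then for every $0\le j\le\nu$ and every real $x\ge0$, \[ \phi_{L/K}^j(x)=\min\left\{h+v_L\left(\binom{h+n}{p^{j_0}}\right)+p^{j_0}x:\ 0\le j_0\le j,\ h\ge0,\ a_h\neq0\right\}. \]
   Context: Let $p$ be a prime and $K$ a field complete with respect to a discrete valuation whose residue field $\overline{K}$ is perfect of characteristic $p$ (the characteristic of $K$ may be $0$ or $p$). Fix a separable closure $K^{sep}$; $v_K$ is the valuation on $K^{sep}$ with $v_K(K^\times)=\mathbb{Z}$, and $R\subset\mathcal{O}_K$ is the set of Teichmüller representatives of $\overline{K}$. $v_p$ denotes the $p$-adic valuation on $\mathbb{Z}$. $L/K$ is a finite totally ramified subextension of $K^{sep}/K$; $v_L$ is the valuation on $K^{sep}$ with $v_L(L^\times)=\mathbb{Z}$ (so $v_L(0)=\infty$, and $v_L(p)=\infty$ if $\operatorname{char}K=p$). For $0\le j\le\nu$ put $\tilde{\imath}_j=\min\{h\ge0: v_p(h+n)\le j,\ a_h\ne0\}$ (or $\infty$ if no such $h$). The indices of inseparability are defined recursively by $i_\nu=0$ and $i_j=\min\{\tilde{\imath}_j,\,i_{j+1}+v_L(p)\}$ for $j=\nu-1,\dots,0$. For $x\in[0,\infty)$ define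 $\tilde{\phi}_{L/K}^j(x)=i_j+p^jx$ and $\phi_{L/K}^j(x)=\min\{\tilde{\phi}_{L/K}^{j_0}(x):0\le j_0\le j\}$. *)

(* Defs.v *)
From HB Require Import structures.
From mathcomp Require Import all_boot all_order all_algebra all_field.
From mathcomp Require Import boolp reals.
Set Implicit Arguments. Unset Strict Implicit. Unset Printing Implicit Defensive.
Import Order.TTheory GRing.Theory Num.Theory.
Local Open Scope ring_scope.

(** Extended values  T ∪ {+oo}, encoded as [option T] with [None] = +oo. *)
Section Ext.
Variable T : realDomainType.
Definition ele (a b : option T) : bool :=
  match a, b with
  | _, None => true
  | None, Some _ => false
  | Some x, Some y => x <= y
  end.
Definition eadd (a b : option T) : option T :=
  match a, b with Some x, Some y => Some (x + y) | _, _ => None end.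
Definition emin (a b : option T) : option T :=
  match a, b with
  | None, _ => b
  | _, None => a
  | Some x, Some y => Some (Num.min x y)
  end.
End Ext.

Definition is_dval (F : fieldType) (v : F -> option int) : Prop :=
  [/\ forall x, v x = None <-> x = 0,
      forall x y, v (x * y) = eadd (v x) (v y),
      forall x y, ele (emin (v x) (v y)) (v (x + y)),
      forall x, x != 0 -> exists z : int, v x = Some z
    & exists pi, v pi = Some 1].

Definition dv_complete (F : fieldType) (v : F -> option int) : Prop :=
  forall u : nat -> F,
    (forall N : int, exists M, forall m k, (M <= m)%N -> (M <= k)%N ->
        ele (Some N) (v (u m - u k))) ->
    exists l, forall N : int, exists M, forall m, (M <= m)%N ->
        ele (Some N) (v (u m - l)).

(** The residue field O_F / m_F is of characteristic p and perfect
    (p = 0 in the residue field, and Frobenius is surjective on it). *)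
Definition residue_perfect_char (F : fieldType) (v : F -> option int) (p : nat)
  : Prop :=
  [/\ prime p,
      ele (Some 1) (v p%:R)
    & forall x, ele (Some 0) (v x) ->
        exists y, ele (Some 0) (v y) /\ ele (Some 1) (v (y ^+ p - x))].

(** Teichmüller representatives: x ∈ O_F which is a p^k-th power in O_F
    for every k (Serre, Local Fields, II §4, Prop. 8). *)
Definition teichmuller (F : fieldType) (v : F -> option int) (p : nat) (x : F)
  : Prop :=
  ele (Some 0) (v x) /\
  forall k : nat, exists y, ele (Some 0) (v y) /\ y ^+ (p ^ k)%N = x.

Section Indices.
Variables (K : fieldType) (a : nat -> K) (n p : nat) (vLp : option int).

Definition nu := logn p n.

Definition itilde (j : nat) : option int :=
  match pselect (exists h, (logn p (h + n) <= j)%N && (a h != 0)) with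
  | left H => Some (Posz (ex_minn H))
  | right _ => None
  end.

(* irec k = i_(nu - k) : i_nu = 0, i_j = min(\tilde i_j, i_(j+1) + v_L(p)). *)
Fixpoint irec (k : nat) : option int :=
  match k with
  | 0 => Some 0
  | k'.+1 => emin (itilde (nu - k)) (eadd (irec k') vLp)
  end.

Definition iidx (j : nat) : option int := irec (nu - j).

Variable R : realType.

Definition phitilde (j : nat) (x : R) : option R :=
  omap (fun i : int => i%:~R + (p ^ j)%N%:R * x) (iidx j).

Definition phi (j : nat) (x : R) : option R :=
  foldr (@emin R) None [seq phitilde j0 x | j0 <- iota 0 j.+1].
End Indices.

(* Main.v *)
Require Import Defs.
From HB Require Import structures.
From mathcomp Require Import all_boot all_order all_algebra all_field.
From mathcomp Require Import boolp reals.
From mathcomp Require Import zify ring lra.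
Set Implicit Arguments. Unset Strict Implicit. Unset Printing Implicit Defensive.
Import Order.TTheory GRing.Theory Num.Theory.

Lemma logn_eq_dvd p a b : prime p -> 0 < a -> 0 < b ->
  (forall e, (p ^ e %| a) = (p ^ e %| b)) -> logn p a = logn p b.
Proof.
move=> pp a0 b0 H; apply/eqP; rewrite eqn_leq.
have := H (logn p a); rewrite pfactor_dvdnn pfactor_dvdn // => /esym ->.
have := H (logn p b); rewrite pfactor_dvdnn pfactor_dvdn // => ->.

Qed.

Lemma logn_subm p k m j : prime p -> p ^ k %| m -> 0 < j < p ^ k -> j <= m ->
  logn p (m - j) = logn p j.
Proof.
move=> pp dm /andP[j0 jk] jm.
have m0 : 0 < m by lia.
case: (ltnP j m) => [jm'|jm']; last first.
  have : p ^ k <= m by apply: dvdn_leq.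
  lia.
apply: logn_eq_dvd => //; first lia.
move=> e; case: (leqP e k) => ek.
  have dem : p ^ e %| m by apply: dvdn_trans dm; apply: dvdn_exp2l.
  apply/idP/idP => H.
    have -> : j = m - (m - j) by lia.
    by apply: dvdn_sub.
  by apply: dvdn_sub.
have pe : p ^ k < p ^ e by rewrite ltn_exp2l // prime_gt1.
apply/idP/idP => H.
  have dkm : p ^ k %| m - j.
    by apply: dvdn_trans H; apply: dvdn_exp2l; apply: ltnW.
  have : p ^ k %| j.
    have -> : j = m - (m - j) by lia.
    by apply: dvdn_sub.
  move/dvdn_leq => /(_ j0); lia.
have := dvdn_leq j0 H; lia.
Qed.

Lemma logn_ffact p k m r : prime p -> p ^ k %| m -> 0 < m -> r < p ^ k ->
  logn p ((m.-1) ^_ r) = logn p r`!.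
Proof.
move=> pp dm m0; have pkm : p ^ k <= m by apply: dvdn_leq.
elim: r => [|r IH] rk; first by rewrite ffactn0 logn1.
rewrite ffactnSr factS lognM; last 2 first.
- by rewrite ffact_gt0; lia.
- lia.
rewrite lognM ?fact_gt0 // IH; last lia.
rewrite addnC; congr (_ + _).
have -> : (m.-1 - r = m - r.+1)%N by lia.
apply: logn_subm dm _ _ => //; lia.
Qed.

Lemma logn_bin p k m : prime p -> 0 < m -> (k <= logn p m)%N ->
  logn p 'C(m, p ^ k) = (logn p m - k)%N.
Proof.
move=> pp m0 km.
have dm : p ^ k %| m by rewrite pfactor_dvdn.
have pk0 : 0 < p ^ k by rewrite expn_gt0 prime_gt0.
have pkm : p ^ k <= m by apply: dvdn_leq.
have E := mul_bin_diag m (p ^ k).-1.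
rewrite prednK // in E.
have C1 : logn p 'C(m.-1, (p ^ k).-1) = 0.
  have := congr1 (logn p) (bin_ffact m.-1 (p ^ k).-1).
  rewrite (logn_ffact _ dm) //; last lia.
  rewrite lognM ?fact_gt0 //; last by rewrite bin_gt0; lia.
  lia.
have := congr1 (logn p) E.
rewrite lognM //; last by rewrite bin_gt0; lia.
rewrite lognM //; last by rewrite bin_gt0.
by rewrite C1 pfactorK //; lia.
Qed.

Local Open Scope ring_scope.

Section ExtLemmas.
Variable T : realDomainType.
Implicit Types a b c d : option T.

Lemma ele_refl a : ele a a.
Proof. by case: a => //= x. Qed.

Lemma ele_trans a b c : ele a b -> ele b c -> ele a c.
Proof. by case: a; case: b; case: c => //= x y z; apply: le_trans. Qed.

Lemma ele_anti a b : ele a b -> ele b a -> a = b.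
Proof. by case: a; case: b => //= x y h1 h2; congr Some; apply/eqP; rewrite eq_le h1 h2. Qed.

Lemma ele_None a : ele a None.
Proof. by case: a. Qed.

Lemma emin_case a b : emin a b = a \/ emin a b = b.
Proof.
case: a => [x|]; case: b => [y|] /=; try by [left|right].
have [h|h] := lerP x y.
  by left; congr Some; apply: min_l.
by right; congr Some; apply: min_r; apply: ltW.
Qed.

Lemma ele_eminl a b : ele (emin a b) a.
Proof. case: a => [x|]; case: b => [y|] //=; by rewrite ?ge_min ?lexx. Qed.

Lemma ele_eminr a b : ele (emin a b) b.
Proof. case: a => [x|]; case: b => [y|] //=; by rewrite ?ge_min ?lexx ?orbT. Qed.

Lemma ele_emin c a b : ele c a -> ele c b -> ele c (emin a b).
Proof. case: a => [x|]; case: b => [y|]; case: c => [z|] //=; by rewrite ?le_min => -> ->. Qed.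

Lemma eadd_mono a b c d : ele a b -> ele c d -> ele (eadd a c) (eadd b d).
Proof. case: a; case: b; case: c; case: d => //= x y z w h1 h2; exact: lerD. Qed.

Lemma eaddA a b c : eadd a (eadd b c) = eadd (eadd a b) c.
Proof. by case: a; case: b; case: c => //= x y z; rewrite addrA. Qed.

Lemma eaddC a b : eadd a b = eadd b a.
Proof. by case: a; case: b => //= x y; rewrite addrC. Qed.

Lemma eadd0 a : eadd a (Some 0) = a.
Proof. by case: a => //= x; rewrite addr0. Qed.

Lemma eadd_ge0 a b : ele (Some 0) a -> ele (Some 0) b -> ele (Some 0) (eadd a b).
Proof. case: a; case: b => //= x y; exact: addr_ge0. Qed.

Lemma ele_eaddr a b : ele (Some 0) b -> ele a (eadd a b).
Proof. move=> h; rewrite -{1}(eadd0 a); apply: eadd_mono => //; exact: ele_refl. Qed.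
End ExtLemmas.

Fixpoint emul (l : nat) (e : option int) : option int :=
  match l with 0 => Some 0 | l'.+1 => eadd (emul l' e) e end.

Lemma emul_ge0 l e : ele (Some 0) e -> ele (Some 0) (emul l e).
Proof. move=> h; elim: l => //= l IH; exact: eadd_ge0. Qed.

Lemma emul_mono l l' e : (l <= l')%N -> ele (Some 0) e -> ele (emul l e) (emul l' e).
Proof.
move=> ll h; elim: l' ll => [|l' IH]; first by rewrite leqn0 => /eqP ->; exact: ele_refl.
rewrite leq_eqVlt => /orP[/eqP->|]; first exact: ele_refl.
rewrite ltnS => /IH H /=; apply: ele_trans H _; exact: ele_eaddr.
Qed.

Lemma emul_Some1 l : emul l (Some 1) = Some l%:Z.
Proof. elim: l => //= l ->; congr Some; lia. Qed.

Section Val.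
Variables (F : fieldType) (v : F -> option int) (hv : is_dval v).

Lemma dv0 : v 0 = None.
Proof. by case: hv => h _ _ _ _; apply/h. Qed.

Lemma dvM x y : v (x * y) = eadd (v x) (v y).
Proof. by case: hv. Qed.

Lemma dvD x y : ele (emin (v x) (v y)) (v (x + y)).
Proof. by case: hv. Qed.

Lemma dvfin x : x != 0 -> exists z, v x = Some z.
Proof. by case: hv => _ _ _ h _; apply: h. Qed.

Lemma dv1 : v 1 = Some 0.
Proof.
have [z hz1] := dvfin (oner_neq0 F).
have := dvM 1 1; rewrite mulr1 hz1 /= => -[] E; congr Some; lia.
Qed.

Lemma dvN1 : v (-1) = Some 0.
Proof.
have [z hz1] : exists z, v (-1) = Some z by apply: dvfin; rewrite oppr_eq0 oner_eq0.
have := dvM (-1) (-1); rewrite mulrNN mulr1 hz1 dv1 /= => -[] E; congr Some; lia.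
Qed.

Lemma dvN x : v (- x) = v x.
Proof. by rewrite -mulN1r dvM dvN1; case: (v x) => //= z; rewrite add0r. Qed.

Lemma dvB x y : ele (emin (v x) (v y)) (v (x - y)).
Proof. by rewrite -(dvN y); apply: dvD. Qed.

Lemma dvX x l : v (x ^+ l) = emul l (v x).
Proof. elim: l => [|l IH]; first by rewrite expr0 dv1. by rewrite exprSr dvM IH. Qed.

Lemma dvnat_ge0 c : ele (Some 0) (v c%:R).
Proof.
elim: c => [|c IH]; first by rewrite dv0.
rewrite -addn1 natrD; apply: ele_trans (dvD _ _); apply: ele_emin => //.
by rewrite dv1.
Qed.

Variable (p : nat) (hp : prime p) (hvp : ele (Some 1) (v p%:R)).

Lemma dv_coprime m : (0 < m)%N -> coprime m p -> v m%:R = Some 0.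
Proof.
move=> m0 cop.
case: (egcdnP p m0) => km kn E _.
move: cop; rewrite /coprime => /eqP g1; rewrite g1 in E.
have E2 : (km * m)%:R - (kn * p)%:R = 1 :> F by rewrite E natrD addrAC subrr add0r.
have key : ele (Some 1) (v m%:R) -> False.
  move=> h1.
  have := dvB ((km * m)%:R) ((kn * p)%:R); rewrite E2 dv1 => h2.
  have h3 : ele (Some 1) (emin (v (km * m)%:R) (v (kn * p)%:R)).
    apply: ele_emin; rewrite natrM dvM.
      by rewrite -[Some 1]/(eadd (Some 0) (Some 1)); apply: eadd_mono => //; apply: dvnat_ge0.
    by rewrite -[Some 1]/(eadd (Some 0) (Some 1)); apply: eadd_mono => //; apply: dvnat_ge0.
  by have := ele_trans h3 h2.
have hm := dvnat_ge0 m.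
case Evm: (v m%:R) hm key => [z|] /= hz key; last by exfalso; apply: key.
have [->//|z1] : (z = 0 \/ 1 <= z)%R by lia.
by exfalso; apply: key.
Qed.

Lemma dv_nat c : (0 < c)%N -> v c%:R = emul (logn p c) (v p%:R).
Proof.
move=> c0; have [m cop E] := pfactor_coprime hp c0.
have m0 : (0 < m)%N by move: c0; rewrite E; case: m {E cop}.
rewrite {1}E natrM dvM dv_coprime //; last by rewrite coprime_sym.
by rewrite natrX dvX eaddC eadd0.
Qed.
End Val.

Section Idx.
Variables (K : fieldType) (a : nat -> K) (n p : nat) (e : option int).
Hypotheses (a0 : a 0%N != 0) (e0 : ele (Some 0) e).

Definition sv h := logn p (h + n).
Definition cand k h := eadd (Some h%:Z) (emul (sv h - k) e).

Lemma iidx_nu : iidx a n p e (nu n p) = Some 0.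
Proof. by rewrite /iidx subnn. Qed.

Lemma iidx_rec k : (k < nu n p)%N ->
  iidx a n p e k = emin (itilde a n p k) (eadd (iidx a n p e k.+1) e).
Proof.
move=> kn; rewrite /iidx.
have -> : (nu n p - k = (nu n p - k.+1).+1)%N by lia.
rewrite /=; congr (emin (itilde _ _ _ _) _).
lia.
Qed.

Lemma I1 d : forall k, (k + d = nu n p)%N ->
  forall h, a h != 0 -> ele (iidx a n p e k) (cand k h).
Proof.
elim: d => [|d IH] k kd h ah.
  rewrite addn0 in kd; rewrite kd iidx_nu /cand.
  by apply: eadd_ge0 => //; apply: emul_ge0.
rewrite iidx_rec; last lia.
case: (leqP (sv h) k) => hs.
  apply: ele_trans (ele_eminl _ _) _.
  rewrite /itilde; case: pselect => [H|nH]; last first.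
    by exfalso; apply: nH; exists h; rewrite ah andbT.
  case: ex_minnP => m _ Hm.
  apply: (@ele_trans _ _ (Some h%:Z)); last exact: ele_eaddr _ (emul_ge0 _ e0).
  by rewrite /= lez_nat; apply: Hm; rewrite ah andbT.
apply: ele_trans (ele_eminr _ _) _.
apply: ele_trans (eadd_mono (IH k.+1 _ h ah) (ele_refl e)) _; first lia.
rewrite /cand -eaddA.
have -> : (sv h - k = (sv h - k.+1).+1)%N by lia.
exact: ele_refl.
Qed.

Lemma I2 d : forall k, (k + d = nu n p)%N ->
  exists h, a h != 0 /\ ele (cand k h) (iidx a n p e k).
Proof.
elim: d => [|d IH] k kd.
  rewrite addn0 in kd; rewrite kd iidx_nu /cand; exists 0%N; split => //.
  by rewrite /sv add0n subnn.
rewrite iidx_rec; last lia.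
case: (emin_case (itilde a n p k) (eadd (iidx a n p e k.+1) e)) => ->.
  rewrite /itilde; case: pselect => [H|nH]; last by exists 0%N; split => //; apply: ele_None.
  case: ex_minnP => m /andP[Hs Hm] _; exists m; split => //.
  rewrite /cand; have -> : (sv m - k = 0)%N by rewrite /sv; lia.
  by rewrite /= addr0.
have [h [ah Hh]] := IH k.+1 ltac:(lia).
exists h; split => //.
apply: ele_trans (eadd_mono Hh (ele_refl e)).
rewrite /cand -eaddA; apply: eadd_mono; first exact: ele_refl.
rewrite -[eadd _ e]/(emul (sv h - k.+1).+1 e); apply: emul_mono => //; lia.
Qed.
End Idx.

Section Phi.
Variables (R : realType) (x : R) (p : nat) (hx : 0 <= x) (hp : (0 < p)%N).

Definition LiftK k (o : option int) : option R :=
  omap (fun i : int => i%:~R + (p ^ k)%N%:R * x) o.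

Lemma LiftK_mono k o o' : ele o o' -> ele (LiftK k o) (LiftK k o').
Proof.
case: o => [u|]; case: o' => [w|] //= h; by rewrite lerD2r ler_int.
Qed.

Lemma LiftK_k k k' o : (k <= k')%N -> ele (LiftK k o) (LiftK k' o).
Proof.
case: o => [u|] //= kk; rewrite lerD2l; apply: ler_wpM2r => //.
by rewrite ler_nat leq_pexp2l.
Qed.

Lemma foldr_le (l : seq nat) (f : nat -> option R) k : k \in l ->
  ele (foldr (@emin R) None [seq f i | i <- l]) (f k).
Proof.
elim: l => // b l IH; rewrite inE => /orP[/eqP->|kl] /=; first exact: ele_eminl.
exact: ele_trans (ele_eminr _ _) (IH kl).
Qed.

Lemma foldr_att (l : seq nat) (f : nat -> option R) : l != [::] ->
  exists k, k \in l /\ foldr (@emin R) None [seq f i | i <- l] = f k.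
Proof.
elim: l => // b l IH _ /=.
case: l IH => [|c l] IH.
  by exists b; split; rewrite ?inE //=; case: (f b).
have [k [kl ->]] := IH isT.
case: (emin_case (f b) (f k)) => ->.
  by exists b; rewrite inE eqxx.
by exists k; rewrite inE kl orbT.
Qed.
End Phi.

Unset Implicit Arguments.

Theorem proposition2p2
  (p : nat) (K : fieldType) (vK : K -> option int)
  (L : fieldExtType K) (vL : L -> option int) (n : nat)
  (piK : K) (piL : L) (a : nat -> K) (R : realType)
  (hvK : is_dval vK) (hcomplete : dv_complete vK)
  (hres : residue_perfect_char vK p)
  (hsep : separable (1%VS : {vspace L}) fullv)
  (hdeg : \dim (fullv : {vspace L}) = n) (hn : (1 < n)%N)
  (hvL : is_dval vL)
  (htot : forall c : K, vL (c%:A) = omap (fun z : int => n%:Z * z) (vK c))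
  (hpiK : vK piK = Some 1) (hpiL : vL piL = Some 1)
  (hteich : forall h, teichmuller vK p (a h))
  (hser : forall N : int, exists H0, forall H, (H0 <= H)%N ->
      ele (Some N) (vL (piK%:A - \sum_(h < H) (a h)%:A * piL ^+ (h + n)))) :
  forall (j : nat) (x : R), (j <= logn p n)%N -> 0 <= x ->
    let T j0 h : option R :=
      omap (fun w : int => h%:R + w%:~R + (p ^ j0)%N%:R * x)
           (vL ('C(h + n, p ^ j0))%:R) in
    let ph := phi a n p (vL p%:R) j x in
    (exists j0 h, (j0 <= j)%N /\ a h != 0 /\ ph = T j0 h) /\
    (forall j0 h, (j0 <= j)%N -> a h != 0 -> ele ph (T j0 h)).
Proof.
move=> j x hj hx T ph.
have [pp hvKp _] := hres.
have p0 : (0 < p)%N by apply: prime_gt0.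
have n0 : (0 < n)%N by lia.
have algnat : forall c : nat, ((c%:R : K)%:A : L) = c%:R by move=> c; rewrite scaler_nat.
have hvp : ele (Some 1) (vL p%:R).
  rewrite -algnat htot; move: hvKp; case: (vK p%:R) => [z|] //= hz; clear -hz hn; nia.
have e0 : ele (Some 0) (vL p%:R) := @ele_trans _ (Some 0) (Some 1) _ ler01 hvp.
have a0 : a 0%N != 0.
  apply/negP => /eqP a00.
  have [H0 HH] := hser (n.+1)%:Z.
  have := HH H0 (leqnn _).
  set S := \sum_(h < H0) _.
  have HS : ele (Some (n.+1)%:Z) (vL S).
    rewrite /S; elim: H0 {HH S} => [|H IH]; first by rewrite big_ord0 (dv0 hvL).
    rewrite big_ord_recr; apply: ele_trans _ (dvD hvL _ _); apply: ele_emin => //.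
    case: H {IH} => [|H]; first by rewrite a00 scale0r mul0r (dv0 hvL).
    rewrite (dvM hvL) (dvX hvL) hpiL emul_Some1 htot.
    have [hte _] := hteich H.+1; move: hte; case: (vK (a H.+1)) => [z|] //= hz; nia.
  move=> hd.
  have := dvD hvL (piK%:A - S) S; rewrite subrK htot hpiK /= => h.
  have := ele_trans (ele_emin hd HS) h => /=; lia.
have hC : forall j0 h, (j0 <= logn p (h + n))%N ->
    vL ('C(h + n, p ^ j0))%:R = emul (logn p (h + n) - j0) (vL p%:R).
  move=> j0 h hj0; rewrite (dv_nat hvL pp hvp); last first.
    rewrite bin_gt0; apply: dvdn_leq; first lia.
    by rewrite pfactor_dvdn //; lia.
  by rewrite logn_bin //; lia.
have hCge : forall j0 h, (j0 <= logn p n)%N ->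
    ele (emul (logn p (h + n) - j0) (vL p%:R)) (vL ('C(h + n, p ^ j0))%:R).
  move=> j0 h hj0; case: (leqP j0 (logn p (h + n))) => hs.
    by rewrite hC //; apply: ele_refl.
  have -> : (logn p (h + n) - j0 = 0)%N by lia.
  exact: (dvnat_ge0 hvL).
have hT : forall j0 h, T j0 h =
    LiftK x p j0 (eadd (Some h%:Z) (vL ('C(h + n, p ^ j0))%:R)).
  move=> j0 h; rewrite /T /LiftK; case: (vL _) => //= w.
  by rewrite intrD -pmulrn.
have P2 : forall j0 h, (j0 <= j)%N -> a h != 0 -> ele ph (T j0 h).
  move=> j0 h hj0 ah.
  pose k := minn j0 (logn p (h + n)).
  have kj : (k <= j)%N by rewrite /k; lia.
  apply: (ele_trans (foldr_le _ (k := k) _)); first by rewrite mem_iota; lia.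
  change (ele (LiftK x p k (iidx a n p (vL p%:R) k)) (T j0 h)).
  apply: ele_trans (LiftK_mono _ _ _ (I1 a0 e0 (d := logn p n - k) _ ah)) _; first by rewrite /nu /k; lia.
  rewrite /cand hT.
  apply: ele_trans (LiftK_k hx p0 _ (k' := j0) _) _; first by rewrite /k; lia.
  apply: LiftK_mono; apply: eadd_mono; first exact: ele_refl.
  apply: ele_trans (hCge j0 h _); last lia.
  apply: emul_mono => //; rewrite /sv /k; lia.
have P1 : forall k, (k <= j)%N -> exists j0 h, (j0 <= j)%N /\ a h != 0 /\
    ele (T j0 h) (phitilde a n p (vL p%:R) k x).
  move=> k kj.
  have kd : (k + (logn p n - k) = nu n p)%N by rewrite /nu; lia.
  have [h [ah Hh]] := I2 a0 e0 kd.
  exists (minn k (logn p (h + n))), h; split; first lia. split => //.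
  change (ele (T (minn k (logn p (h + n))) h) (LiftK x p k (iidx a n p (vL p%:R) k))).
  apply: ele_trans _ (LiftK_mono _ _ _ Hh).
  rewrite hT hC; last lia.
  apply: ele_trans (LiftK_k hx p0 _ (k' := k) _) _; first lia.
  apply: LiftK_mono; rewrite /cand /sv.
  have -> : (logn p (h + n) - minn k (logn p (h + n)) = logn p (h + n) - k)%N by lia.
  exact: ele_refl.
have [k [kin Ek]] := foldr_att (fun k => phitilde a n p (vL p%:R) k x) (l := iota 0 j.+1) isT.
rewrite mem_iota in kin.
have [j0 [h [hj0 [ah Hle]]]] := P1 k ltac:(lia).
split; last exact: P2.
exists j0, h; do 2 split => //.
apply: ele_anti; first exact: P2.
by rewrite /ph /phi Ek.
Qed.
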